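(* Let $\varphi$ be a skew-morphism of a finite group $A$ with power function $\pi:A\to\mathbb{Z}_m$, where $m$ is the order of $\varphi$, let $n$ be a positive multiple of $m$, and let $\Pi:A\to\mathbb{Z}_n$ be an extended power function of $\varphi$. Let $\mathrm{Av}:A\to\mathbb{Z}_{n/m}$ and $\Lambda:A\to\mathbb{Z}_{n/m}$ be the average and mate functions of $\Pi$. Then: (a) $\mathrm{Av}(x)\equiv\mathrm{Av}(\varphi(x))\pmod{n/m}$ for all $x\in A$; (b) $\mathrm{Av}$ is a group homomorphism from $A$ into the multiplicative group $\mathbb{Z}_{n/m}^*$; (c) if $\varphi$ is an automorphism of $A$, then $\Lambda(xy)\equiv\Lambda(y)+\Lambda(x)\mathrm{Av}(y)\pmod{n/m}$ for all $x,y\in A$; in particular, if $\mathrm{Av}(x)\equiv1\pmod{n/m}$ for all $x\in A$, then $\Lambda(xy)\equiv\Lambda(x)+\Lambda(y)\pmod{n/m}$ for all $x,y\in A$.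
   Context: A skew-morphism of a finite group $A$ is a permutation $\varphi$ of $A$ with $\varphi(1_A)=1_A$ for which there is a function $\pi:A\to\mathbb{Z}_m$ ($m$ the order of $\varphi$) with $\varphi(xy)=\varphi(x)\varphi^{\pi(x)}(y)$ for all $x,y\in A$; when $\varphi$ is an automorphism, $\pi(x)\equiv1\pmod m$ for all $x$. For a positive multiple $n$ of $m$, $\Pi:A\to\mathbb{Z}_n$ is an extended power function of $\varphi$ if (i) $\Pi(x)\equiv\pi(x)\pmod m$; (ii) $\Pi(1_A)\equiv1\pmod n$; (iii) $\Pi(xy)\equiv\sum_{i=1}^{\Pi(x)}\Pi(\varphi^{i-1}(y))\pmod n$ for all $x,y\in A$. Let $\sigma_\Pi(x,k)=\sum_{i=1}^{k}\Pi(\varphi^{i-1}(x))\in\mathbb{Z}_n$. Since $\sigma_\Pi(x,m)\equiv0\pmod m$, the average function is $\mathrm{Av}(x)=\frac1m\sigma_\Pi(x,m)\in\mathbb{Z}_{n/m}$, and the mate function is $\Lambda(x)=\frac1m(\Pi(x)-\pi(x))\in\mathbb{Z}_{n/m}$, where $\pi(x)$ is represented by an integer congruent to it modulo $m$ (in the automorphism case, by $1$). *)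

(* Defs.v *)
From mathcomp Require Import all_boot all_order all_algebra all_fingroup.
Set Implicit Arguments. Unset Strict Implicit. Unset Printing Implicit Defensive.

(* The finite group A is the whole finGroupType gT; phi is a permutation of gT.
   Elements of Z_m / Z_n are represented by natural numbers (congruences mod m, n). *)

Section SkewDefs.
Variable gT : finGroupType.

Definition ord_perm (phi : {perm gT}) : nat := #[phi]%g.

Definition is_skew_morphism (phi : {perm gT}) (pi : gT -> nat) : Prop :=
  phi 1%g = 1%g /\
  forall x y : gT, phi (x * y)%g = (phi x * (phi ^+ pi x)%g y)%g.

Definition is_group_aut (phi : {perm gT}) : Prop :=
  forall x y : gT, phi (x * y)%g = (phi x * phi y)%g.

Definition sigmaPi (phi : {perm gT}) (Pi : gT -> nat) (x : gT) (k : nat) : nat :=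
  \sum_(1 <= i < k.+1) Pi ((phi ^+ (i - 1))%g x).

Definition is_ext_power_fun (phi : {perm gT}) (pi : gT -> nat) (n : nat)
    (Pi : gT -> nat) : Prop :=
  [/\ forall x, Pi x = pi x %[mod ord_perm phi],
      Pi 1%g = 1 %[mod n]
    & forall x y, Pi (x * y)%g = sigmaPi phi Pi y (Pi x) %[mod n]].

Definition Av (phi : {perm gT}) (Pi : gT -> nat) (x : gT) : nat :=
  sigmaPi phi Pi x (ord_perm phi) %/ ord_perm phi.

(* mate function Lambda(x) = (Pi(x) - pi(x))/m, where pirep x is the chosen integer
   representative of pi(x) (in the automorphism case, 1) *)
Definition Mate (phi : {perm gT}) (Pi : gT -> nat) (pirep : gT -> int) (x : gT) : int :=
  (((Pi x)%:Z - pirep x) %/ (ord_perm phi)%:Z)%Z.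

End SkewDefs.

(* Main.v *)
Require Import Defs.
From mathcomp Require Import all_boot all_order all_algebra all_fingroup.
From mathcomp Require Import cyclic ring.
Import GRing.Theory.
Set Implicit Arguments. Unset Strict Implicit.

Definition SS (gT : finGroupType) (phi : {perm gT}) (Pi : gT -> nat) (x : gT) (k : nat) : nat :=
  \sum_(i < k) Pi ((phi ^+ i)%g x).

Lemma sigmaE (gT : finGroupType) (phi : {perm gT}) Pi x k :
  sigmaPi phi Pi x k = SS phi Pi x k.
Proof.
rewrite /sigmaPi /SS big_add1 /= big_mkord; apply: eq_bigr => i _.
by rewrite subn1.
Qed.

Lemma SS_S (gT : finGroupType) (phi : {perm gT}) Pi x k :
  SS phi Pi x k.+1 = SS phi Pi x k + Pi ((phi ^+ k)%g x).
Proof. by rewrite /SS big_ord_recr. Qed.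

Lemma SS_add (gT : finGroupType) (phi : {perm gT}) Pi x a b :
  SS phi Pi x (a + b) = SS phi Pi x a + SS phi Pi ((phi ^+ a)%g x) b.
Proof.
elim: b => [|b IH]; first by rewrite addn0 /SS big_ord0 addn0.
by rewrite addnS !SS_S IH -addnA expgD permM.
Qed.

Lemma SS_per (gT : finGroupType) (phi : {perm gT}) Pi x L :
  SS phi Pi x (#[phi]%g * L) = L * SS phi Pi x #[phi]%g.
Proof.
elim: L => [|L IH]; first by rewrite muln0 /SS big_ord0.
rewrite mulnS addnC SS_add IH expgM expg_order expg1n perm1.
by rewrite mulSn addnC.
Qed.


Lemma SS1 (gT : finGroupType) (phi : {perm gT}) Pi x : SS phi Pi x 1 = Pi x.
Proof. by rewrite /SS big_ord_recr big_ord0 expg0 perm1. Qed.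

Lemma SS_shift (gT : finGroupType) (phi : {perm gT}) Pi x :
  SS phi Pi (phi x) #[phi]%g = SS phi Pi x #[phi]%g.
Proof.
have := SS_add phi Pi x 1 #[phi]%g.
rewrite addnC SS_add expg_order perm1 !SS1 expg1 => H.
by apply/eqP; rewrite -(eqn_add2l (Pi x)) -H addnC.
Qed.

Lemma powPi (gT : finGroupType) (phi : {perm gT}) (pi Pi : gT -> nat) z :
  Pi z = pi z %[mod #[phi]%g] -> (phi ^+ pi z)%g = (phi ^+ Pi z)%g.
Proof. by move=> H; rewrite -expg_mod_order -H expg_mod_order. Qed.

Lemma iterA (gT : finGroupType) (phi : {perm gT}) (pi Pi : gT -> nat) :
  is_skew_morphism phi pi -> (forall z, Pi z = pi z %[mod #[phi]%g]) ->
  forall x y k, (phi ^+ k)%g (x * y)%g = ((phi ^+ k)%g x * (phi ^+ SS phi Pi x k)%g y)%g.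
Proof.
move=> [_ Hs] HP x y; elim=> [|k IH]; first by rewrite /SS big_ord0 !expg0 !perm1.
rewrite expgSr permM IH Hs (powPi (HP _)) SS_S expgD permM.
by rewrite permM.
Qed.

Lemma keyB (gT : finGroupType) (phi : {perm gT}) (pi Pi : gT -> nat) n :
  is_skew_morphism phi pi -> (forall z, Pi z = pi z %[mod #[phi]%g]) ->
  (forall a b, Pi (a * b)%g = SS phi Pi b (Pi a) %[mod n]) ->
  forall x y k, SS phi Pi (x * y)%g k = SS phi Pi y (SS phi Pi x k) %[mod n].
Proof.
move=> Hs HP HPi x y; elim=> [|k IH]; first by rewrite /SS !big_ord0.
rewrite !SS_S SS_add (iterA Hs HP) -modnDmr HPi modnDmr -modnDml IH modnDml.
by [].
Qed.

Lemma keyC (gT : finGroupType) (phi : {perm gT}) (pi Pi : gT -> nat) :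
  is_skew_morphism phi pi -> (forall z, Pi z = pi z %[mod #[phi]%g]) ->
  forall x, #[phi]%g %| SS phi Pi x #[phi]%g.
Proof.
move=> Hs HP x; rewrite order_dvdn; apply/eqP/permP => y.
have := iterA Hs HP x y #[phi]%g.
rewrite expg_order !perm1 => /mulgI <-.
by [].
Qed.

Lemma SSmate (gT : finGroupType) (phi : {perm gT}) Pi y k :
  k = 1 %[mod #[phi]%g] ->
  ((SS phi Pi y k)%:Z = (Pi y)%:Z + (((k%:Z - 1) %/ (#[phi]%g)%:Z)%Z * (SS phi Pi y #[phi]%g)%:Z))%R.
Proof.
case: k => [|k] H.
  have m1 : #[phi]%g = 1.
    apply/eqP; rewrite -dvdn1 /dvdn; by rewrite -H mod0n.
  by rewrite m1 divz1 SS1 /SS big_ord0 sub0r mulN1r subrr.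
have Hk : #[phi]%g %| k.
  by rewrite /dvdn; apply/eqP; move/eqP: H; rewrite -[1]add0n -addn1 eqn_modDr mod0n => /eqP.
have -> : ((k.+1)%:Z - 1 = k%:Z)%R by rewrite -addn1 PoszD addrK.
rewrite divz_nat -{1}(divnK Hk) -addn1 addnC SS_add SS1 mulnC SS_per SS_shift.
by rewrite PoszD PoszM.
Qed.

Theorem proposition3p3 (gT : finGroupType) (phi : {perm gT}) (pi : gT -> nat)
    (n : nat) (Pi : gT -> nat) :
  is_skew_morphism phi pi ->
  0 < n -> ord_perm phi %| n ->
  is_ext_power_fun phi pi n Pi ->
  [/\ (* (a) *)
      (forall x : gT, Av phi Pi x = Av phi Pi (phi x) %[mod n %/ ord_perm phi]),
      (* (b) Av : A -> (Z_{n/m})^* is a group homomorphism *)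
      (forall x : gT, coprime (Av phi Pi x) (n %/ ord_perm phi)) /\
      (forall x y : gT,
         Av phi Pi (x * y)%g = Av phi Pi x * Av phi Pi y %[mod n %/ ord_perm phi])
    & (* (c) *)
      is_group_aut phi ->
      (forall x y : gT,
         (Mate phi Pi (fun _ => 1%R) (x * y)%g
          = Mate phi Pi (fun _ => 1%R) y
            + Mate phi Pi (fun _ => 1%R) x * (Av phi Pi y)%:Z
            %[mod (n %/ ord_perm phi)%:Z])%Z) /\
      ((forall x : gT, Av phi Pi x = 1 %[mod n %/ ord_perm phi]) ->
       forall x y : gT,
         (Mate phi Pi (fun _ => 1%R) (x * y)%g
          = Mate phi Pi (fun _ => 1%R) x + Mate phi Pi (fun _ => 1%R) y
            %[mod (n %/ ord_perm phi)%:Z])%Z)].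
Proof.
move=> Hs n0 mn [HP HP1 HPi'].
have HPi : forall a b, Pi (a * b)%g = SS phi Pi b (Pi a) %[mod n].
  by move=> a b; rewrite HPi' sigmaE.
have AvE : forall x, Av phi Pi x = SS phi Pi x #[phi]%g %/ #[phi]%g.
  by move=> x; rewrite /Av sigmaE.
rewrite /ord_perm in mn *.
have m0 : 0 < #[phi]%g := order_gt0 _.
have SSE : forall x, SS phi Pi x #[phi]%g = Av phi Pi x * #[phi]%g.
  by move=> x; rewrite AvE divnK // (keyC Hs HP).
have nq : n = (n %/ #[phi]%g) * #[phi]%g by rewrite divnK.
have Hmul : forall x y, Av phi Pi (x * y)%g = Av phi Pi x * Av phi Pi y %[mod n %/ #[phi]%g].
  move=> x y; apply/eqP; rewrite -(eqn_pmul2r m0) !muln_modl -nq -SSE.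
  rewrite (keyB Hs HP HPi) SSE mulnC SS_per SSE mulnA; by [].
have H1 : forall i, (phi ^+ i)%g 1%g = 1%g.
  elim=> [|i IH]; first by rewrite expg0 perm1.
  by rewrite expgSr permM IH; case: Hs.
have Av1 : Av phi Pi 1%g = 1 %[mod n %/ #[phi]%g].
  rewrite AvE /SS (eq_bigr (fun _ => Pi 1%g)); last by move=> i _; rewrite H1.
  rewrite sum_nat_const card_ord mulKn //.
  have qn : n %/ #[phi]%g %| n by rewrite {2}nq dvdn_mulr.
  by rewrite -(modn_dvdm _ qn) HP1 modn_dvdm.
split.
- by move=> x; rewrite !AvE SS_shift.
- split => //.
  move=> x.
  have : coprime (Av phi Pi x * Av phi Pi x^-1) (n %/ #[phi]%g).
    by rewrite -coprime_modl -Hmul mulgV Av1 coprime_modl coprime1n.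
  by rewrite coprimeMl => /andP [].
- move=> Haut.
  have pix : forall x, Pi x = 1 %[mod #[phi]%g].
    move=> x; rewrite HP.
    have : (phi ^+ pi x)%g = (phi ^+ 1)%g.
      apply/permP => y; rewrite expg1; apply: (@mulgI _ (phi x)).
      by case: Hs => _ <-; rewrite Haut.
    by move/eqP; rewrite eq_expg_mod_order => /eqP.
  have MateE : forall x, ((Mate phi Pi (fun _ => 1%R) x) * (#[phi]%g)%:Z = (Pi x)%:Z - 1)%R.
    move=> x; rewrite /Mate /ord_perm divzK //.
    rewrite -eqz_mod_dvd; apply/eqP.
    by rewrite (modz_nat (Pi x)) (modz_nat 1) pix.
  have m0' : ((#[phi]%g)%:Z != 0)%R by rewrite eqz_nat -lt0n.
  have c1 : forall x y : gT,
         (Mate phi Pi (fun _ => 1%R) (x * y)%g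
          = Mate phi Pi (fun _ => 1%R) y
            + Mate phi Pi (fun _ => 1%R) x * (Av phi Pi y)%:Z
            %[mod (n %/ #[phi]%g)%:Z])%Z.
    move=> x y; apply/eqP; rewrite eqz_mod_dvd -(@dvdz_mul2r _ _ _ m0') -PoszM -nq.
    rewrite mulrBl mulrDl -mulrA -PoszM -SSE !MateE.
    have E := SSmate Pi y (pix x).
    rewrite /Mate /ord_perm.
    have -> : (((Pi (x * y)%g)%:Z - 1) - ((Pi y)%:Z - 1 + (((Pi x)%:Z - 1) %/ (#[phi]%g)%:Z)%Z * (SS phi Pi y #[phi]%g)%:Z) = (Pi (x * y)%g)%:Z - (SS phi Pi y (Pi x))%:Z)%R.
      by rewrite E; ring.
    rewrite -eqz_mod_dvd; apply/eqP.
    by rewrite !modz_nat HPi.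
  split => // Hav x y.
  rewrite c1; apply/eqP; rewrite eqz_mod_dvd.
  have -> : (Mate phi Pi (fun _ => 1%R) y + Mate phi Pi (fun _ => 1%R) x * (Av phi Pi y)%:Z - (Mate phi Pi (fun _ => 1%R) x + Mate phi Pi (fun _ => 1%R) y) = Mate phi Pi (fun _ => 1%R) x * ((Av phi Pi y)%:Z - 1))%R by ring.
  apply: dvdz_mull; rewrite -eqz_mod_dvd; apply/eqP.
  by rewrite (modz_nat (Av phi Pi y)) (modz_nat 1) Hav.
Qed.
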